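(* Let $\mathcal{X},\mathcal{Y}$ be finite sets, $P_X$ a probability distribution on $\mathcal{X}$, $d:\mathcal{X}\times\mathcal{Y}\to[0,\infty)$, $Q_Y$ a probability distribution on $\mathcal{Y}$, and $w\in(0,1]$. For $x\in\mathcal{X}$ define $$W^w_{Y|X=x}(y)=w^{-1}\,Q_Y(y)\,\Pr_U\big[p_{c,x,y,U}\le w\big],\qquad y\in\mathcal{Y},$$ where $U$ is uniform on $[0,1]$. Then for every $x$, $W^w_{Y|X=x}$ is a probability distribution on $\mathcal{Y}$, and $$\tilde D(w,Q_Y)=\mathbb{E}_{P_X\times W^w_{Y|X}}[d(X,Y)].$$
   Context: $p_{c,x,y,u}=Q_Y\{y': d(x,y')<d(x,y)\}+u\cdot Q_Y\{y': d(x,y')=d(x,y)\}$. $\tilde D(w,Q_Y)=w^{-1}\,\mathbb{E}[d(X,Y)\mathbf{1}\{p_{c,X,Y,U}\le w\}]$ with $X\sim P_X$, $Y\sim Q_Y$, $U$ uniform on $[0,1]$ independent. $P_X\times W_{Y|X}$ denotes the joint law with $X\sim P_X$ and $Y$ given $X=x$ distributed as $W_{Y|X=x}$. *)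

(* Defs.v *)
From HB Require Import structures.
From mathcomp Require Import all_boot all_order all_algebra.
From mathcomp Require Import all_classical all_reals all_analysis.
Set Implicit Arguments. Unset Strict Implicit. Unset Printing Implicit Defensive.
Import Order.TTheory GRing.Theory Num.Theory.
Local Open Scope classical_set_scope.
Local Open Scope ring_scope.

Section Defs.
Variables (R : realType) (X Y : finType).

Definition is_dist (T : finType) (P : T -> R) : Prop :=
  (forall t, 0 <= P t) /\ \sum_(t : T) P t = 1.

Definition p_c (Q : Y -> R) (d : X -> Y -> R) (x : X) (y : Y) (u : R) : R :=
  \sum_(y' | d x y' < d x y) Q y' + u * \sum_(y' | d x y' == d x y) Q y'.

Definition PrU (A : set R) : R :=
  fine ((@lebesgue_measure R) (`[0%R, 1%R] `&` A)).

Definition Ww (Q : Y -> R) (d : X -> Y -> R) (w : R) (x : X) (y : Y) : R :=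
  w^-1 * Q y * PrU [set u | p_c Q d x y u <= w].

(* D~(w,Q) = w^{-1} E[d(X,Y) 1{p_{c,X,Y,U} <= w}], X ~ P, Y ~ Q, U ~ Unif[0,1]
   independent: the expectation over the product law, written as the finite
   sums over x, y of the Lebesgue integral over u in [0,1]. *)
Definition Dtilde (P : X -> R) (Q : Y -> R) (d : X -> Y -> R) (w : R) : R :=
  w^-1 * \sum_(x : X) \sum_(y : Y) P x * Q y *
    Rintegral (@lebesgue_measure R) `[0%R, 1%R]
      (fun u : R => d x y * ((p_c Q d x y u <= w)%R : bool)%:R).

End Defs.

(* Main.v *)
Require Import Defs.
Require Import Defs.
From HB Require Import structures.
From mathcomp Require Import all_boot all_order all_algebra.
From mathcomp Require Import all_classical all_reals all_analysis.
Import Order.TTheory GRing.Theory Num.Theory.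
Local Open Scope classical_set_scope.
Local Open Scope ring_scope.

Section Meas.
Variable R : realType.

Lemma PrU_lin (a b w : R) : 0 <= a -> 0 < b -> 0 < w ->
  PrU [set u | a + u * b <= w] = (Num.min w (a + b) - Num.min w a) / b.
Proof.
move=> a0 b0 w0.
have bN : b != 0 by rewrite gt_eqF.
rewrite /PrU.
case: (ltP w a) => wa.
  have -> : `[0, 1] `&` [set u | a + u * b <= w] = set0.
    apply/seteqP; split => u //= []; rewrite in_itv /= => /andP[u0 _].
    move=> h; have : a <= w.
      by apply: le_trans h; rewrite lerDl mulr_ge0 // ltW.
    by rewrite leNgt wa.
  have h1 : w < a + b by apply: (lt_le_trans wa); rewrite lerDl ltW.
  by rewrite measure0 /Num.min h1 /= subrr mul0r.
case: (leP w (a + b)) => wab.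
  set c := (w - a) / b.
  have c0 : 0 <= c by rewrite divr_ge0 // ?subr_ge0 // ltW.
  have c1 : c <= 1 by rewrite ler_pdivrMr // mul1r lerBlDl.
  have -> : `[0, 1] `&` [set u | a + u * b <= w] = `[0, c]%classic.
    apply/seteqP; split => u /=.
      move=> []; rewrite !in_itv /= => /andP[-> _] h.
      by rewrite /c ler_pdivlMr // lerBrDl.
    rewrite !in_itv /= => /andP[u0 uc]; split.
      by rewrite u0 (le_trans uc c1).
    by move: uc; rewrite /c ler_pdivlMr // lerBrDl.
  rewrite lebesgue_measure_itv /= lte_fin.
  case: (ltP 0 c) => cc /=; first by rewrite oppr0 addr0.
  by apply/esym; apply/le_anti; rewrite cc c0.
have -> : `[0, 1] `&` [set u | a + u * b <= w] = `[0, 1]%classic.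
  apply/seteqP; split => u /=; first by case.
  move=> h; split => //; move: h; rewrite in_itv /= => /andP[u0 u1].
  apply: (le_trans _ (ltW wab)); rewrite lerD2l.
  by rewrite -{2}(mul1r b) ler_wpM2r // ltW.
rewrite lebesgue_measure_itv /= lte_fin ltr01 /= oppr0 addr0.
by rewrite [a + b]addrC addrK divff.
Qed.


Lemma int_ind (a b w c : R) :
  (\int[@lebesgue_measure R]_(u in `[0%R, 1%R]) (c * ((a + u * b <= w)%R : bool)%:R)%R)%R
  = c * PrU [set u | a + u * b <= w].
Proof.
have mA : measurable [set u : R | a + u * b <= w].
  have mf := measurable_realfun.measurable_fun_ler (D:=setT)
    (measurable_realfun.measurable_funD (measurable_cst a) (measurable_realfun.measurable_funM (@measurable_id _ R setT) (measurable_cst b)))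
    (measurable_cst w).
  have := mf measurableT [set true] I.
  by rewrite setTI.
transitivity (\int[@lebesgue_measure R]_(u in `[0%R, 1%R] `&` [set u | a + u * b <= w]) c)%R.
  rewrite Rintegral_mkcondr; apply: eq_Rintegral => u _; rewrite /patch.
  case h: (a + u * b <= w).
    by rewrite (mem_set (h : [set u | a + u * b <= w] u)) mulr1.
  rewrite memNset ?mulr0 //= h //.
by rewrite Rintegral_cst //; apply: measurableI => //; exact: measurable_itv.
Qed.
End Meas.
Section Tele.
Variables (R : realType) (T : finType) (Q : T -> R) (g : T -> R).
Hypothesis Q0 : forall t, 0 <= Q t.

Definition loS (S : {set T}) y := \sum_(y' in S | g y' < g y) Q y'.
Definition bS (S : {set T}) y := \sum_(y' in S | g y' == g y) Q y'.

Lemma exmax (S : {set T}) y1 : y1 \in S -> exists2 y0, y0 \in S & forall y, y \in S -> g y <= g y0.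
Proof.
move=> y1S.
have [y0 y0S H] := @Order.TotalTheory.arg_maxP _ _ _ y1 (mem S) g y1S.
by exists y0 => // y yS; apply: H.
Qed.

Lemma tele (phi : R -> R) n (S : {set T}) : (#|S| <= n)%N ->
  \sum_(y in S) Q y / bS S y * (phi (loS S y + bS S y) - phi (loS S y))
  = phi (\sum_(y in S) Q y) - phi 0.
Proof.
elim: n S => [|n IH] S hS.
  move: hS; rewrite leqn0 cards_eq0 => /eqP ->.
  by rewrite !big_set0 subrr.
case: (set_0Vmem S) => [->|[y1 y1S]]; first by rewrite !big_set0 subrr.
have [y0 y0S Hmax] := @exmax S y1 y1S.
set M := [set y in S | g y == g y0].
set S' := S :\: M.
have y0M : y0 \in M by rewrite inE y0S eqxx.
have hS' : (#|S'| <= n)%N.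
  have : (#|S'| < #|S|)%N.
    apply: proper_card; apply/properP; split; first exact: subsetDl.
    by exists y0 => //; rewrite inE y0M.
  by move=> h; rewrite -ltnS (leq_trans h hS).
have splitS (F : T -> R) : \sum_(y in S) F y = \sum_(y in S') F y + \sum_(y in M) F y.
  rewrite (big_setID M) /= addrC; congr (_ + _).
  by apply: eq_bigl => y; rewrite !inE; case: (y \in S); rewrite ?andbT ?andbF.
have lt0 y : y \in S' -> g y < g y0.
  move=> /setDP [yS]; rewrite inE yS /= => nge.
  by rewrite lt_neqAle nge Hmax.
have e1 : \sum_(y in S') Q y / bS S y * (phi (loS S y + bS S y) - phi (loS S y))
   = \sum_(y in S') Q y / bS S' y * (phi (loS S' y + bS S' y) - phi (loS S' y)).
  apply: eq_bigr => y yS'.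
  have ylt := lt0 y yS'.
  have -> : loS S y = loS S' y.
    apply: eq_bigl => y'; rewrite !inE.
    case: (y' \in S); rewrite ?andbF ?andbT //=.
    case e: (g y' == g y0) => //=; rewrite (eqP e).
    by apply/negbTE; rewrite -leNgt ltW.
  have -> : bS S y = bS S' y.
    apply: eq_bigl => y'; rewrite !inE.
    case: (y' \in S); rewrite ?andbF ?andbT //=.
    case e: (g y' == g y0) => //=; rewrite (eqP e).
    by rewrite (gt_eqF ylt).
  by [].
set B := \sum_(y in M) Q y.
set T' := \sum_(y in S') Q y.
have e2 : \sum_(y in M) Q y / bS S y * (phi (loS S y + bS S y) - phi (loS S y))
   = phi (T' + B) - phi T'.
  have -> : \sum_(y in M) Q y / bS S y * (phi (loS S y + bS S y) - phi (loS S y))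
     = \sum_(y in M) Q y / B * (phi (T' + B) - phi T').
    apply: eq_bigr => y; rewrite inE => /andP[yS /eqP gy].
    have -> : loS S y = T'.
      apply: eq_bigl => y'; rewrite !inE gy.
      case y'S: (y' \in S); rewrite ?andbF ?andbT //=.
      by rewrite lt_neqAle Hmax // andbT.
    have -> : bS S y = B.
      by apply: eq_bigl => y'; rewrite !inE gy.
    by [].
  rewrite -big_distrl /= -big_distrl /= -/B.
  have [->|Bn] := eqVneq B 0; first by rewrite addr0 subrr mulr0.
  by rewrite divff // mul1r.
rewrite (splitS (fun y => Q y / bS S y * (phi (loS S y + bS S y) - phi (loS S y)))) e1 e2 (IH S' hS') splitS -/T' -/B.
by rewrite addrC addrA subrK.
Qed.
End Tele.
Arguments loS {R T} Q g S y.
Arguments bS {R T} Q g S y.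

Theorem proposition2 (R : realType) (X Y : finType)
  (P : X -> R) (Q : Y -> R) (d : X -> Y -> R) (w : R) :
  is_dist P -> is_dist Q -> (forall x y, 0 <= d x y) ->
  0 < w -> w <= 1 ->
  (forall x, is_dist (Ww Q d w x)) /\
  Dtilde P Q d w = \sum_(x : X) \sum_(y : Y) P x * Ww Q d w x y * d x y.
Proof.
move=> [P0 P1] [Q0 Q1] d0 w0 w1.
have key x y : Q y * PrU [set u | p_c Q d x y u <= w] =
   Q y / bS Q (d x) [set: Y]%SET y * (Num.min w (loS Q (d x) [set: Y]%SET y + bS Q (d x) [set: Y]%SET y)
      - Num.min w (loS Q (d x) [set: Y]%SET y)).
  have eL : loS Q (d x) [set: Y]%SET y = \sum_(y' | d x y' < d x y) Q y'.
    by rewrite /loS; apply: eq_bigl => y'; rewrite inE.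
  have eB : bS Q (d x) [set: Y]%SET y = \sum_(y' | d x y' == d x y) Q y'.
    by rewrite /bS; apply: eq_bigl => y'; rewrite inE.
  have [->|Qn] := eqVneq (Q y) 0; first by rewrite !mul0r.
  have Qp : 0 < Q y by rewrite lt_neqAle eq_sym Qn Q0.
  have bp : 0 < bS Q (d x) [set: Y]%SET y.
    apply: (lt_le_trans Qp); rewrite eB (bigD1 y) //= lerDl.
    by apply: sumr_ge0 => ? _.
  have l0 : 0 <= loS Q (d x) [set: Y]%SET y by rewrite eL; apply: sumr_ge0 => ? _.
  rewrite /p_c -eL -eB PrU_lin //.
  by rewrite mulrA [_ / _ * _]mulrAC.
have sumT : \sum_(y in [set: Y]%SET) Q y = 1.
  by rewrite -Q1; apply: eq_bigl => y; rewrite inE.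
split.
  move=> x; split.
    move=> y; rewrite /Ww; apply: mulr_ge0; first by rewrite mulr_ge0 ?invr_ge0 ?(ltW w0).
    by rewrite /PrU; apply: fine_ge0; apply: measure_ge0.
  rewrite /Ww.
  under eq_bigr do rewrite -mulrA key.
  rewrite -big_distrr /=.
  have := @tele R Y Q (d x) (fun t => Num.min w t) #|[set: Y]%SET| [set: Y]%SET (leqnn _).
  have eS (F : Y -> R) : \sum_(y in [set: Y]%SET) F y = \sum_y F y.
    by apply: eq_bigl => y; rewrite inE.
  move=> H; rewrite -eS H sumT (min_l w1) (min_r (ltW w0)) subr0.
  by rewrite mulVf // gt_eqF.
rewrite /Dtilde big_distrr /=; apply: eq_bigr => x _.
rewrite big_distrr /=; apply: eq_bigr => y _.
rewrite /p_c int_ind /Ww /p_c.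
set p := PrU _. move: p (d x y) (P x) (Q y) (w^-1) => p dd a b v.
by rewrite !mulrA [v * a]mulrC [RHS]mulrAC.
Qed.
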